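(* Let $\lambda_1,\lambda_2\in\mathbb{C}\setminus\{0,-1,-2,\dots\}$, set $\gamma=\lambda_1+\lambda_2-1$, and let $\alpha,\beta\in\mathbb{C}$ with $\alpha+\beta\notin\mathbb{Z}$, $\alpha\notin\{-1,-2,\dots\}$ and $\beta+\gamma\notin\{-1,-2,\dots\}$. On $W=V_{\lambda_1}\otimes V_{\lambda_2}$ put $H^{(1)}=H\otimes\mathbb{I}$, $H^{(2)}=\mathbb{I}\otimes H$, $D=H^{(1)}-H^{(2)}-\lambda_1+\lambda_2+2\alpha+2\beta+2$ (an invertible diagonal operator), and define $$\Delta(H)=H^{(1)}+H^{(2)},$$ $$\Delta(E)=D^{-1}\Big((H^{(1)}-\lambda_1+2\alpha+2\beta+2)(E\otimes\mathbb{I})+(\lambda_2-H^{(2)}+2\alpha+2\beta+2)(\mathbb{I}\otimes E)\Big),$$ $$\Delta(F)=D^{-1}\Big((H^{(1)}-\lambda_1+2\alpha+2)(H^{(1)}-\lambda_1+2\beta+2\gamma+2)(H^{(1)}+\lambda_1)^{-1}(F\otimes\mathbb{I})$$ $$\qquad\qquad+(\lambda_2-H^{(2)}+2\beta)(H^{(2)}-\lambda_2-2\alpha+2\gamma)(H^{(2)}+\lambda_2)^{-1}(\mathbb{I}\otimes F)\Big).$$ Then (a) these operators satisfy $[\Delta(H),\Delta(E)]=2\Delta(E)$, $[\Delta(H),\Delta(F)]=-2\Delta(F)$, $[\Delta(E),\Delta(F)]=\Delta(H)$, i.e. they give a representation of $sl_2$ on $W$; and (b) for all integers $0\le k\le N$,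 the vectors $w_{k,N}=\sum_{n=0}^N R_n(k,N)\,|\lambda_1,n\rangle\otimes|\lambda_2,N-n\rangle$ satisfy $\Delta(H)w_{k,N}=(\lambda_1+\lambda_2+2N)w_{k,N}$, $\Delta(E)w_{k,N}=w_{k,N+1}$ and $\Delta(F)w_{k,N}=-(N-k)(N+k+\gamma)\,w_{k,N-1}$ (with $w_{k,k-1}=0$); i.e. the $R_n(k,N)$ are Clebsch–Gordan coefficients for this generalized coproduct of $sl_2$.
   Context: $sl_2$ is generated by $H,E,F$ with $[H,E]=2E$, $[H,F]=-2F$, $[E,F]=H$. For $\lambda\in\mathbb{C}$, $V_\lambda$ has basis $\{|\lambda,n\rangle:n\ge0\}$ with $H|\lambda,n\rangle=(\lambda+2n)|\lambda,n\rangle$, $E|\lambda,n\rangle=|\lambda,n+1\rangle$, $F|\lambda,n\rangle=-n(n+\lambda-1)|\lambda,n-1\rangle$. The functions $R_n(k,N)$ (proportional to Racah polynomials) are $$R_n(k,N)=\binom{N}{n}\,{}_4F_3\!\left(\begin{matrix}-n,\ n+\alpha+\beta-N+1,\ -k,\ k+\gamma\\ \alpha+1,\ \beta+\gamma+1,\ -N\end{matrix}\;\Big|\;1\right)=\binom{N}{n}\sum_{j=0}^{\min(n,k)}\frac{(-n)_j(n+\alpha+\beta-N+1)_j(-k)_j(k+\gamma)_j}{j!(\alpha+1)_j(\beta+\gamma+1)_j(-N)_j},$$ with $(a)_j=a(a+1)\cdots(a+j-1)$. Operator products mean composition. *)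

(* Defs.v *)
From mathcomp Require Import all_boot all_algebra.
From mathcomp Require Import complex reals.
Set Implicit Arguments. Unset Strict Implicit. Unset Printing Implicit Defensive.
Import GRing.Theory Num.Theory.
Local Open Scope ring_scope.

Section Defs.
Variable C : fieldType.

(* Coordinates of a vector of V_lam : f n = coefficient of |lam,n>. *)
(* Coordinates of a vector of W = V_l1 (x) V_l2 :
   v n m = coefficient of |l1,n> (x) |l2,m>. *)
Definition Vec := nat -> nat -> C.

Definition Hs (lam : C) (f : nat -> C) : nat -> C :=
  fun n => (lam + 2 * n%:R) * f n.
Definition Es (f : nat -> C) : nat -> C :=
  fun n => if n is n'.+1 then f n' else 0.
(* F|lam,n> = -n(n+lam-1)|lam,n-1> *)
Definition Fs (lam : C) (f : nat -> C) : nat -> C :=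
  fun n => - (n.+1%:R * (n%:R + lam)) * f n.+1.

Definition tensL (A : (nat -> C) -> (nat -> C)) : Vec -> Vec :=
  fun v n m => A (fun n' => v n' m) n.
Definition tensR (A : (nat -> C) -> (nat -> C)) : Vec -> Vec :=
  fun v n m => A (v n) m.

Definition vscale (c : C) (v : Vec) : Vec := fun n m => c * v n m.
Definition opadd (A B : Vec -> Vec) : Vec -> Vec := fun v n m => A v n m + B v n m.
Definition opcomm (A B : Vec -> Vec) : Vec -> Vec :=
  fun v n m => A (B v) n m - B (A v) n m.
Definition opscale (c : C) (A : Vec -> Vec) : Vec -> Vec := fun v n m => c * A v n m.

(* Functional calculus g(H^(1), H^(2)) of the commuting diagonal operators
   H^(1) = H (x) I, H^(2) = I (x) H (joint eigenvalues l1+2n, l2+2m). *)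
Definition fcalc (l1 l2 : C) (g : C -> C -> C) : Vec -> Vec :=
  fun v n m => g (l1 + 2 * n%:R) (l2 + 2 * m%:R) * v n m.

Definition H1 (l1 : C) : Vec -> Vec := tensL (Hs l1).
Definition H2 (l2 : C) : Vec -> Vec := tensR (Hs l2).

Definition gam (l1 l2 : C) : C := l1 + l2 - 1.

(* eigenvalue function of D ; D^{-1} = fcalc of its inverse *)
Definition Dfun (l1 l2 a b : C) (x y : C) : C := x - y - l1 + l2 + 2 * a + 2 * b + 2.

Definition DeltaH (l1 l2 : C) : Vec -> Vec := opadd (H1 l1) (H2 l2).

Definition DeltaE (l1 l2 a b : C) : Vec -> Vec :=
  fcalc l1 l2 (fun x y => (Dfun l1 l2 a b x y)^-1) \o
  opadd (fcalc l1 l2 (fun x _ => x - l1 + 2 * a + 2 * b + 2) \o tensL Es)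
        (fcalc l1 l2 (fun _ y => l2 - y + 2 * a + 2 * b + 2) \o tensR Es).

Definition DeltaF (l1 l2 a b : C) : Vec -> Vec :=
  let g := gam l1 l2 in
  fcalc l1 l2 (fun x y => (Dfun l1 l2 a b x y)^-1) \o
  opadd (fcalc l1 l2 (fun x _ => (x - l1 + 2 * a + 2) * (x - l1 + 2 * b + 2 * g + 2)
                                  * (x + l1)^-1) \o tensL (Fs l1))
        (fcalc l1 l2 (fun _ y => (l2 - y + 2 * b) * (y - l2 - 2 * a + 2 * g)
                                  * (y + l2)^-1) \o tensR (Fs l2)).

(* finitely supported coordinate functions = vectors of the algebraic tensor product W *)
Definition finsupp (v : Vec) : Prop :=
  exists B : nat, forall n m : nat, (B <= n + m)%N -> v n m = 0.

Definition poch (a : C) (j : nat) : C := \prod_(i < j) (a + i%:R).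

Definition Rfun (a b g : C) (n k N : nat) : C :=
  'C(N, n)%:R *
  \sum_(j < (minn n k).+1)
     (poch (- n%:R) j * poch (n%:R + a + b - N%:R + 1) j * poch (- k%:R) j
        * poch (k%:R + g) j)
     / (j`!%:R * poch (a + 1) j * poch (b + g + 1) j * poch (- N%:R) j).

Definition wvec (a b g : C) (k N : nat) : Vec :=
  fun n m => if (n + m == N)%N then Rfun a b g n k N else 0.

End Defs.

(* Main.v *)
Require Import Defs.
From mathcomp Require Import all_boot all_algebra.
From mathcomp Require Import complex reals.
From mathcomp Require Import ring lra.
From Stdlib Require Import FunctionalExtensionality.
Import GRing.Theory Num.Theory.
Local Open Scope ring_scope.
Local Open Scope complex_scope.
Section S.
Variable R : realType.
Local Notation C := (R[i]).
Variables l1 l2 a b : C.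
Hypothesis hl1 : forall n : nat, l1 <> - n%:R.
Hypothesis hab : forall z : int, a + b <> z%:~R.
Lemma two_nz : (2 : C) != 0.
Proof. by rewrite pnatr_eq0. Qed.
Lemma nat_nz n : (n.+1%:R : C) != 0.
Proof. by rewrite pnatr_eq0. Qed.
Definition dd (n m : nat) : C := 2 * (n%:R - m%:R + a + b + 1).
Lemma dd_nz n m : dd n m != 0.
Proof.
rewrite /dd mulf_eq0 negb_or two_nz /=; apply/eqP => H.
apply: (hab (m%:Z - n%:Z - 1)).
rewrite !intrB.
have ->: (m%:Z)%:~R = m%:R :> C by [].
have ->: (n%:Z)%:~R = n%:R :> C by [].
transitivity (a + b - (n%:R - m%:R + a + b + 1)); first by rewrite H subr0.
ring.
Qed.
Hypothesis hl2 : forall n : nat, l2 <> - n%:R.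
Definition gg := gam l1 l2.
Definition eA (n : nat) : C := 2 * (n%:R + a + b + 1).
Definition eB (m : nat) : C := 2 * (a + b + 1 - m%:R).
Definition fP (n : nat) : C := -2 * n.+1%:R * (n%:R + a + 1) * (n%:R + b + gg + 1).
Definition fQ (m : nat) : C := -2 * m.+1%:R * (b - m%:R) * (m%:R - a + gg).
Definition hh (n m : nat) : C := l1 + l2 + 2 * (n%:R + m%:R).

Lemma l1nz n : l1 + 2 * n%:R + l1 != 0.
Proof.
apply/eqP => H; apply: (hl1 n).
transitivity (l1 - (l1 + 2 * n%:R + l1) / 2); first by rewrite H mul0r subr0.
by field.
Qed.
Lemma l2nz n : l2 + 2 * n%:R + l2 != 0.
Proof.
apply/eqP => H; apply: (hl2 n).
transitivity (l2 - (l2 + 2 * n%:R + l2) / 2); first by rewrite H mul0r subr0.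
by field.
Qed.

Lemma DH_eq v n m : DeltaH l1 l2 v n m = hh n m * v n m.
Proof. rewrite /DeltaH /opadd /H1 /H2 /tensL /tensR /Hs /hh; ring. Qed.

Lemma Dfun_dd n m : Dfun l1 l2 a b (l1 + 2 * n%:R) (l2 + 2 * m%:R) = dd n m.
Proof. rewrite /Dfun /dd; ring. Qed.

Lemma DE_eq v n m : DeltaE l1 l2 a b v n m =
  (dd n m)^-1 * (eA n * (if n is n'.+1 then v n' m else 0) +
                 eB m * (if m is m'.+1 then v n m' else 0)).
Proof.
rewrite /DeltaE /opadd /fcalc /tensL /tensR /Es /= Dfun_dd; congr (_ * (_ * _ + _ * _)).
  by rewrite /eA; ring.
by rewrite /eB; ring.
Qed.

Lemma DF_eq v n m : DeltaF l1 l2 a b v n m =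
  (dd n m)^-1 * (fP n * v n.+1 m + fQ m * v n m.+1).
Proof.
rewrite /DeltaF /opadd /fcalc /tensL /tensR /Fs /= Dfun_dd /fP /fQ /gg.
by field; rewrite dd_nz l1nz l2nz.
Qed.

Ltac nzs := repeat (apply/andP; split); (apply: dd_nz || apply: l1nz || apply: l2nz || apply: two_nz || apply: nat_nz).

Lemma HE v n m : opcomm (DeltaH l1 l2) (DeltaE l1 l2 a b) v n m = opscale 2 (DeltaE l1 l2 a b) v n m.
Proof.
rewrite /opcomm /opscale DH_eq !DE_eq.
case: n => [|n]; case: m => [|m] /=; rewrite ?DH_eq /hh; ring.
Qed.

Lemma HF v n m : opcomm (DeltaH l1 l2) (DeltaF l1 l2 a b) v n m = opscale (-2) (DeltaF l1 l2 a b) v n m.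
Proof.
rewrite /opcomm /opscale DH_eq !DF_eq !DH_eq /hh; ring.
Qed.

Lemma abnm (x : C) (p q : nat) : x = a + b + p%:R - q%:R -> x != 0.
Proof.
move=> ->; apply/eqP => H; apply: (hab (q%:Z - p%:Z)).
rewrite !intrB.
have ->: (q%:Z)%:~R = q%:R :> C by [].
have ->: (p%:Z)%:~R = p%:R :> C by [].
transitivity (a + b - (a + b + p%:R - q%:R)); first by rewrite H subr0.
ring.
Qed.

Ltac nzq n m :=
  first [ solve [apply: (@abnm _ n m); ring]
        | solve [apply: (@abnm _ n.+1 m); ring]
        | solve [apply: (@abnm _ n.+2 m); ring]
        | solve [apply: (@abnm _ n.+3 m); ring]
        | solve [apply: (@abnm _ n m.+1); ring]
        | solve [apply: (@abnm _ n m.+2); ring]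
        | solve [apply: (@abnm _ n m.+3); ring]
        | solve [apply: (@abnm _ n.+1 m.+1); ring]
        | solve [apply: (@abnm _ n.+2 m.+1); ring]
        | solve [apply: (@abnm _ n.+1 m.+2); ring]
        | solve [apply: (@abnm _ n.+3 m.+1); ring]
        | solve [apply: (@abnm _ n.+1 m.+3); ring] ].
Ltac nzall n m := repeat (apply/andP; split); nzq n m.

Lemma EF v n m : opcomm (DeltaE l1 l2 a b) (DeltaF l1 l2 a b) v n m = DeltaH l1 l2 v n m.
Proof.
rewrite /opcomm DE_eq DF_eq DH_eq.
case: n => [|n]; case: m => [|m] /=; rewrite ?DE_eq ?DF_eq /=;
 rewrite /dd /eA /eB /fP /fQ /hh /gg /gam; field.
- nzall 0%N 0%N.
- nzall 0%N m.
- nzall n 0%N.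
- nzall n m.
Qed.

Lemma nz_eq (E F : C) : F != 0 -> F = E -> E != 0.
Proof. by move=> h <-. Qed.
Lemma nz_eqN (E F : C) : F != 0 -> F = - E -> E != 0.
Proof. by move=> h e; apply/eqP => h0; move: h; rewrite e h0 oppr0 eqxx. Qed.
Lemma nz_eqc (E F c : C) : F != 0 -> F = c * E -> E != 0.
Proof. by move=> h e; apply/eqP => h0; move: h; rewrite e h0 mulr0 eqxx. Qed.
Ltac nzh := repeat (apply/andP; split);
  match goal with h : is_true (~~ (_ == _)) |- _ =>
    first [ solve [apply: (nz_eq _ _ h); ring] | solve [apply: (nz_eqN _ _ h); ring]
          | solve [apply: (@nz_eqc _ _ 2 h); ring] | solve [apply: (@nz_eqc _ _ (-2) h); ring] ] end.

Lemma poch0 (x : C) : poch x 0 = 1.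
Proof. by rewrite /poch big_ord0. Qed.
Lemma poch_last (x : C) j : poch x j.+1 = poch x j * (x + j%:R).
Proof. by rewrite /poch big_ord_recr. Qed.
Lemma poch_succ (x y : C) j : x + 1 = y -> poch x j.+1 = x * poch y j.
Proof.
move=> <-; elim: j => [|j IH]; first by rewrite poch_last !poch0; ring.
rewrite poch_last IH poch_last -mulrA; congr (_ * (_ * _)); ring.
Qed.
Lemma poch_nz (x : C) j : (forall i, (i < j)%N -> x + i%:R != 0) -> poch x j != 0.
Proof.
elim: j => [|j IH] h; first by rewrite poch0 oner_eq0.
rewrite poch_last mulf_neq0 //; first by apply: IH => i hi; apply: h; exact: ltnW.
exact: h.
Qed.
Lemma poch_negn0 n j : (n < j)%N -> poch (- n%:R : C) j = 0.
Proof.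
move=> h; rewrite /poch (bigD1 (Ordinal h)) //= addNr mul0r //.
Qed.
Lemma poch_negN_nz N j : (j <= N)%N -> poch (- N%:R : C) j != 0.
Proof.
move=> h; apply: poch_nz => i hi; apply/eqP => e.
have : (N%:R : C) = i%:R - (- N%:R + i%:R) by ring.
rewrite e subr0 => /eqP; rewrite eqr_nat => /eqP ei; move: hi h; rewrite ei => hi h.
by move: (leq_trans hi h); rewrite ltnn.
Qed.

Definition Tm (n k N j : nat) : C :=
  poch (- n%:R) j * poch (n%:R + a + b - N%:R + 1) j * poch (- k%:R) j
        * poch (k%:R + gam l1 l2) j
     / (j`!%:R * poch (a + 1) j * poch (b + gam l1 l2 + 1) j * poch (- N%:R) j).

Lemma Rfun_k n k N : Rfun a b (gam l1 l2) n k N = 'C(N, n)%:R * \sum_(j < k.+1) Tm n k N j.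
Proof.
rewrite /Rfun; congr (_ * _).
rewrite [LHS](_ : _ = \sum_(j < (minn n k).+1) Tm n k N j) //.
have h' : ((minn n k).+1 <= k.+1)%N by rewrite ltnS geq_minr.
rewrite (big_ord_widen _ _ h') big_mkcond /=; apply: eq_bigr => i _.
case: ifP => // /negbT; rewrite -leqNgt => hi.
have hk := ltn_ord i.
have hn : (n < i)%N.
  move: hi; rewrite gtn_min => /orP [//|hk'].
  by move: hk; rewrite ltnS leqNgt hk'.
by rewrite /Tm poch_negn0 ?mul0r.
Qed.

Lemma R0 k N : Rfun a b (gam l1 l2) 0 k N = 1.
Proof.
rewrite /Rfun min0n big_ord1 bin0 /= !poch0 fact0. by field.
Qed.

Lemma fact_nz j : (j`!%:R : C) != 0.
Proof. by rewrite pnatr_eq0 -lt0n fact_gt0. Qed.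

Hypothesis ha : forall n : nat, a <> - n.+1%:R.
Hypothesis hbg : forall n : nat, b + gam l1 l2 <> - n.+1%:R.

Lemma pa_nz j : poch (a + 1) j != 0.
Proof.
apply: poch_nz => i _; apply/eqP => e; apply: (ha i).
transitivity (a - (a + 1 + i%:R)); first by rewrite e subr0.
ring.
Qed.
Lemma pb_nz j : poch (b + gam l1 l2 + 1) j != 0.
Proof.
apply: poch_nz => i _; apply/eqP => e; apply: (hbg i).
transitivity (b + gam l1 l2 - (b + gam l1 l2 + 1 + i%:R)); first by rewrite e subr0.
ring.
Qed.

Lemma natd_nz (p q : nat) : (q < p)%N -> (- p%:R + q%:R : C) != 0.
Proof.
move=> h; apply/eqP => e.
have : (p%:R : C) = q%:R - (- p%:R + q%:R) by ring.
rewrite e subr0 => /eqP; rewrite eqr_nat => /eqP ei.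
by move: h; rewrite ei ltnn.
Qed.

Lemma termE n m k j : (k <= (n+m).+1)%N -> (j < k.+1)%N ->
  (dd n.+1 m.+1)^-1 * (eA n.+1 * ('C((n+m).+1, n)%:R * Tm n k (n+m).+1 j)
      + eB m.+1 * ('C((n+m).+1, n.+1)%:R * Tm n.+1 k (n+m).+1 j))
  = 'C((n+m).+2, n.+1)%:R * Tm n.+1 k (n+m).+2 j.
Proof.
move=> hk hj.
have h1 := nat_nz n.
have hb1 : ('C((n+m).+1, n.+1)%:R : C) = 'C((n+m).+1, n)%:R * m.+1%:R / n.+1%:R.
  have e := mul_bin_left (n+m).+1 n.
  have e0 : ((n+m).+1 - n = m.+1)%N by rewrite -addnS addKn.
  rewrite e0 in e.
  have e2 := congr1 (fun x => x%:R : C) e; rewrite /= !natrM in e2.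
  rewrite -[LHS](mulKf (nat_nz n)) e2; field; nzh.
have hb2 : ('C((n+m).+2, n.+1)%:R : C) = 'C((n+m).+1, n)%:R + 'C((n+m).+1, n.+1)%:R.
  by rewrite binS natrD addrC.
rewrite hb2 hb1.
have hd := dd_nz n.+1 m.+1.
rewrite /dd /eA /eB in hd *.
case: j hj => [|j] hj.
  rewrite /Tm !poch0 fact0. field. nzh.
have hjk : (j < (n+m).+1)%N by apply: leq_trans hk.
have hfact := fact_nz j.+1.
have hpa := pa_nz j.+1.
have hpb := pb_nz j.+1.
have hpN := poch_negN_nz _ _ (ltnW hjk).
have hNj := natd_nz _ _ hjk.
have hN1 := nat_nz (n+m).+1.
rewrite /Tm.
rewrite (poch_last (- n%:R) j).
rewrite (@poch_succ (- n.+1%:R) (- n%:R) j); last by ring.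
rewrite (poch_last (n.+1%:R + a + b - (n+m).+1%:R + 1) j).
rewrite (@poch_succ (n%:R + a + b - (n+m).+1%:R + 1) (n.+1%:R + a + b - (n+m).+1%:R + 1) j); last by ring.
rewrite (@poch_succ (n.+1%:R + a + b - (n+m).+2%:R + 1) (n.+1%:R + a + b - (n+m).+1%:R + 1) j); last by ring.
rewrite (poch_last (- (n+m).+1%:R) j).
rewrite (@poch_succ (- (n+m).+2%:R) (- (n+m).+1%:R) j); last by ring.
field. nzh.
Qed.

Lemma RNN k N : (k <= N)%N -> Rfun a b (gam l1 l2) N k N = Rfun a b (gam l1 l2) N.+1 k N.+1.
Proof.
move=> hk; rewrite !Rfun_k !binn; congr (_ * _); apply: eq_bigr => [[j hj]] _ /=.
have hjN : (j <= N)%N by apply: leq_trans hk.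
have pN := poch_negN_nz N j hjN.
have pN1 := poch_negN_nz N.+1 j (leqW hjN).
have hf := fact_nz j. have hpa := pa_nz j. have hpb := pb_nz j.
rewrite /Tm (_ : N%:R + a + b - N%:R + 1 = a + b + 1); last by ring.
rewrite (_ : N.+1%:R + a + b - N.+1%:R + 1 = a + b + 1); last by ring.
field; nzh.
Qed.

Lemma Ew k N : (k <= N)%N ->
  DeltaE l1 l2 a b (wvec a b (gam l1 l2) k N) = wvec a b (gam l1 l2) k N.+1.
Proof.
move=> hk; apply: functional_extensionality => n; apply: functional_extensionality => m.
rewrite DE_eq /wvec.
case: n => [|n]; case: m => [|m] /=; rewrite ?add0n ?addn0 ?addSn ?addnS ?eqSS.
- by rewrite !mulr0 addr0 mulr0.
- case: eqP => [e|ne]; last by rewrite !mulr0 addr0 mulr0.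
  subst m; rewrite !R0.
  have hd := dd_nz 0 N.+1; rewrite /dd /eA /eB in hd *; field; nzh.
- case: eqP => [e|ne]; last by rewrite !mulr0 addr0 mulr0.
  subst n; rewrite -RNN //.
  have hd := dd_nz N.+1 0; rewrite /dd /eA /eB in hd *; field; nzh.
- case: eqP => [e|ne]; last by rewrite !mulr0 addr0 mulr0.
  subst N; rewrite !Rfun_k.
  rewrite !mulr_sumr -big_split mulr_sumr /=.
  apply: eq_bigr => j _; exact: termE.
Qed.

Lemma a_nz i : a + 1 + i%:R != 0.
Proof.
apply/eqP => e; apply: (ha i).
transitivity (a - (a + 1 + i%:R)); first by rewrite e subr0.
ring.
Qed.
Lemma b_nz i : b + gam l1 l2 + 1 + i%:R != 0.
Proof.
apply/eqP => e; apply: (hbg i).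
transitivity (b + gam l1 l2 - (b + gam l1 l2 + 1 + i%:R)); first by rewrite e subr0.
ring.
Qed.

Definition Gc (n m j : nat) : C :=
  if j is j'.+1 then
    - (n%:R - m%:R + 1 + a + b) / n.+1%:R * (a + j'.+1%:R) * (b + gam l1 l2 + j'.+1%:R)
    * poch (- n.+1%:R) j'.+1 * poch (n.+1%:R + a + b - (n+m).+1%:R + 1) j'
    * poch ((n+m).+1%:R + gam l1 l2) j'.+1
    / (j'`!%:R * poch (a + 1) j'.+1 * poch (b + gam l1 l2 + 1) j'.+1)
  else 0.

Lemma termF n m j : (j < (n+m).+2)%N ->
  (n%:R + a + 1) * (n%:R + b + gam l1 l2 + 1) * Tm n.+1 (n+m).+1 (n+m).+1 j
  + (b - m%:R) * (m%:R - a + gam l1 l2) * Tm n (n+m).+1 (n+m).+1 j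
  = Gc n m j.+1 - Gc n m j.
Proof.
move=> hj.
have h1 := nat_nz n.
case: j hj => [|j] hj.
  have hpa := pa_nz 1. have hpb := pb_nz 1.
  rewrite /Tm /Gc !poch_last !poch0 in hpa hpb *.
  rewrite fact0; field; nzh.
have hf := fact_nz j.
have hj1 := nat_nz j.
have hpa := pa_nz j.+1.
have hpb := pb_nz j.+1.
have hpK := poch_negN_nz (n+m).+1 j.+1 (hj : (j.+1 <= (n+m).+1)%N).
have ha1 := a_nz j.+1.
have hb1 := b_nz j.+1.
rewrite /Tm /Gc.
rewrite (poch_last (- n.+1%:R) j.+1).
rewrite (@poch_succ (- n.+1%:R) (- n%:R) j); last by ring.
rewrite (poch_last (- n%:R) j).
rewrite (poch_last (n.+1%:R + a + b - (n+m).+1%:R + 1) j).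
rewrite (@poch_succ (n%:R + a + b - (n+m).+1%:R + 1) (n.+1%:R + a + b - (n+m).+1%:R + 1) j); last by ring.
rewrite (poch_last ((n+m).+1%:R + gam l1 l2) j.+1).
rewrite (poch_last (a + 1) j.+1).
rewrite (poch_last (b + gam l1 l2 + 1) j.+1).
rewrite factS natrM.
field; nzh.
Qed.

Lemma binrel n m : ('C((n+m).+1, n.+1)%:R : C) = 'C((n+m).+1, n)%:R * m.+1%:R / n.+1%:R.
Proof.
have h1 := nat_nz n.
have e := mul_bin_left (n+m).+1 n.
have e0 : ((n+m).+1 - n = m.+1)%N by rewrite -addnS addKn.
rewrite e0 in e.
have e2 := congr1 (fun x => x%:R : C) e; rewrite /= !natrM in e2.
rewrite -[LHS](mulKf (nat_nz n)) e2; field; nzh.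
Qed.

Lemma sumF n m :
  (n%:R + a + 1) * (n%:R + b + gam l1 l2 + 1) * (\sum_(j < (n+m).+2) Tm n.+1 (n+m).+1 (n+m).+1 j)
  + (b - m%:R) * (m%:R - a + gam l1 l2) * (\sum_(j < (n+m).+2) Tm n (n+m).+1 (n+m).+1 j) = 0.
Proof.
rewrite !mulr_sumr -big_split /=.
rewrite (eq_bigr (fun j : 'I_(n+m).+2 => Gc n m j.+1 - Gc n m j)); last first.
  by move=> j _; apply: termF.
rewrite -(big_mkord xpredT (fun j => Gc n m j.+1 - Gc n m j)) telescope_sumr //.
rewrite /Gc poch_negn0; first by rewrite !(mulr0, mul0r, subr0).
by rewrite !ltnS leq_addr.
Qed.

Lemma Fbase k n m : DeltaF l1 l2 a b (wvec a b (gam l1 l2) k k) n m = 0.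
Proof.
rewrite DF_eq /wvec addSn addnS.
case: eqP => [e|ne]; last by rewrite !mulr0 addr0 mulr0.
subst k; rewrite !Rfun_k.
have hs := sumF n m.
have h1 := nat_nz n.
set S1 := \sum_(j < (n+m).+2) Tm n.+1 (n+m).+1 (n+m).+1 j in hs *.
set S0 := \sum_(j < (n+m).+2) Tm n (n+m).+1 (n+m).+1 j in hs *.
rewrite binrel.
transitivity ((dd n m)^-1 * (-2 * m.+1%:R * 'C((n+m).+1, n)%:R *
  ((n%:R + a + 1) * (n%:R + b + gam l1 l2 + 1) * S1
  + (b - m%:R) * (m%:R - a + gam l1 l2) * S0))).
  congr (_ * _); rewrite /fP /fQ /gg; field; nzh.
by rewrite hs !mulr0.
Qed.

Lemma DE_scale c v n m : DeltaE l1 l2 a b (vscale c v) n m = c * DeltaE l1 l2 a b v n m.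
Proof. rewrite !DE_eq /vscale; case: n => [|n]; case: m => [|m] /=; ring. Qed.
Lemma DE_zero n m : DeltaE l1 l2 a b (fun _ _ => 0) n m = 0.
Proof. rewrite DE_eq; case: n => [|n]; case: m => [|m] /=; ring. Qed.

Lemma Fzero k : DeltaF l1 l2 a b (wvec a b (gam l1 l2) k k)
  = vscale (- ((k - k)%:R * (k%:R + k%:R + gam l1 l2)))
      (if (k < k)%N then wvec a b (gam l1 l2) k k.-1 else (fun _ _ => 0)).
Proof.
rewrite ltnn; apply: functional_extensionality => n; apply: functional_extensionality => m.
by rewrite Fbase /vscale mulr0.
Qed.

Lemma Fw k N : (k <= N)%N -> DeltaF l1 l2 a b (wvec a b (gam l1 l2) k N)
  = vscale (- ((N - k)%:R * (N%:R + k%:R + gam l1 l2)))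
      (if (k < N)%N then wvec a b (gam l1 l2) k N.-1 else (fun _ _ => 0)).
Proof.
elim: N => [|N IH] hk.
  have e : k = 0%N by apply/eqP; rewrite -leqn0.
  by subst k; apply: Fzero.
move: hk; rewrite leq_eqVlt => /orP [/eqP <-|hk]; first exact: Fzero.
rewrite ltnS in hk; rewrite ltnS hk /=.
apply: functional_extensionality => n; apply: functional_extensionality => m.
rewrite -(Ew k N hk).
have h := EF (wvec a b (gam l1 l2) k N) n m; rewrite /opcomm in h.
transitivity (DeltaE l1 l2 a b (DeltaF l1 l2 a b (wvec a b (gam l1 l2) k N)) n m
   - DeltaH l1 l2 (wvec a b (gam l1 l2) k N) n m); first by rewrite -h; ring.
rewrite (IH hk) DE_scale.
have EFw : DeltaE l1 l2 a b (if (k < N)%N then wvec a b (gam l1 l2) k N.-1 else fun _ _ => 0) n m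
   = (if (k < N)%N then wvec a b (gam l1 l2) k N n m else 0).
  case: ifP => hkN; last exact: DE_zero.
  have hN : (0 < N)%N by apply: leq_ltn_trans hkN.
  have hk' : (k <= N.-1)%N by rewrite -ltnS prednK.
  by rewrite (Ew k N.-1 hk') prednK.
rewrite EFw DH_eq /vscale /wvec.
have [e|ne] := eqVneq (n + m)%N N.
  rewrite /hh -(natrD _ n m) e.
  case: ifP => hkN.
    rewrite (natrB _ hk) (natrB _ (leqW hk)) /gam; ring.
  have ekN : k = N by apply/eqP; rewrite eqn_leq hk leqNgt hkN.
  subst k; rewrite subnn subSnn /gam; ring.
case: ifP => _; ring.
Qed.

Lemma Hw k N : DeltaH l1 l2 (wvec a b (gam l1 l2) k N)
   = vscale (l1 + l2 + 2 * N%:R) (wvec a b (gam l1 l2) k N).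
Proof.
apply: functional_extensionality => n; apply: functional_extensionality => m.
rewrite DH_eq /vscale /wvec.
have [e|ne] := eqVneq (n + m)%N N.
  by rewrite /hh -(natrD _ n m) e.
by rewrite !mulr0.
Qed.
End S.

Theorem mainTheorem4 (R : realType) (l1 l2 a b : R[i])
  (hl1 : forall n : nat, l1 <> - n%:R)
  (hl2 : forall n : nat, l2 <> - n%:R)
  (hab : forall z : int, a + b <> z%:~R)
  (ha : forall n : nat, a <> - n.+1%:R)
  (hbg : forall n : nat, b + gam l1 l2 <> - n.+1%:R) :
  (forall v : Vec R[i], finsupp v ->
     [/\ opcomm (DeltaH l1 l2) (DeltaE l1 l2 a b) v
           = opscale 2 (DeltaE l1 l2 a b) v,
         opcomm (DeltaH l1 l2) (DeltaF l1 l2 a b) v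
           = opscale (-2) (DeltaF l1 l2 a b) v &
         opcomm (DeltaE l1 l2 a b) (DeltaF l1 l2 a b) v
           = DeltaH l1 l2 v])
  /\
  (forall k N : nat, (k <= N)%N ->
     let g := gam l1 l2 in
     [/\ DeltaH l1 l2 (wvec a b g k N)
           = vscale (l1 + l2 + 2 * N%:R) (wvec a b g k N),
         DeltaE l1 l2 a b (wvec a b g k N) = wvec a b g k N.+1 &
         DeltaF l1 l2 a b (wvec a b g k N)
           = vscale (- ((N - k)%:R * (N%:R + k%:R + g)))
               (if (k < N)%N then wvec a b g k N.-1 else (fun _ _ => 0))]).
Proof.
split.
  move=> v _; split; apply: functional_extensionality => n;
    apply: functional_extensionality => m.
  - by apply: HE.
  - by apply: HF.
  - by apply: EF.
move=> k N hk g; split.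
- exact: Hw.
- by apply: Ew.
- by apply: Fw.
Qed.
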